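(* Let $f:[0,1]\to\mathbb{R}$ with $f(0),f(1)\in\mathbb{Z}$, let $n\in\mathbb{N}_+$, $n\ge 2$, and let $\Phi_n:[0,1]\to\mathbb{R}$ satisfy \[ \Phi_n\left(\tfrac{2}{n}\right)-2\Phi_n\left(\tfrac{1}{n}\right)+\Phi_n(0)\ge\frac12\left(2\binom{n}{1}^{-1}+\binom{n}{2}^{-1}\right), \] \[ \Phi_n\left(\tfrac{k+2}{n}\right)-2\Phi_n\left(\tfrac{k+1}{n}\right)+\Phi_n\left(\tfrac{k}{n}\right)\ge\frac12\left(\binom{n}{k}^{-1}+2\binom{n}{k+1}^{-1}+\binom{n}{k+2}^{-1}\right),\quad k=1,\dots,n-3\ (\text{when } n\ge4), \] \[ \Phi_n(1)-2\Phi_n\left(\tfrac{n-1}{n}\right)+\Phi_n\left(\tfrac{n-2}{n}\right)\ge\frac12\left(\binom{n}{n-2}^{-1}+2\binom{n}{n-1}^{-1}\right). \] (a) If $f(x)-\Phi_n(x)$ is convex on $[0,1]$, then $\widehat{B}_n(f)$ is convex on $[0,1]$. (b) If $f(x)+\Phi_n(x)$ is concave on $[0,1]$, then $\widehat{B}_n(f)$ is concave on $[0,1]$.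
   Context: For $n\in\mathbb{N}_+$ and $f:[0,1]\to\mathbb{R}$, $\widehat{B}_n(f)(x):=\sum_{k=0}^n \left\langle f\left(\frac{k}{n}\right)\binom{n}{k}\right\rangle x^k(1-x)^{n-k}$, where $\langle\alpha\rangle$ is the integer nearest to $\alpha$ (when $\alpha$ is a half-integer, $\langle\alpha\rangle$ may be either neighbouring integer, chosen arbitrarily; the result holds for any such choice). *)

(* Defs.v *)
From HB Require Import structures.
From mathcomp Require Import all_boot all_order all_algebra.
From mathcomp Require Import reals.
Set Implicit Arguments. Unset Strict Implicit. Unset Printing Implicit Defensive.
Import Order.TTheory GRing.Theory Num.Theory.
Local Open Scope ring_scope.

(* m k is "a nearest integer" to a: |a - m| <= 1/2 (both neighbours allowed
   at half-integers). *)
Definition is_nearest_int (R : realType) (a : R) (m : int) : Prop :=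
  `|a - m%:~R| <= 2^-1.

(* The integer Bernstein operator, given the chosen roundings m k of
   f(k/n) * C(n,k), k = 0..n. *)
Definition Bhat (R : realType) (n : nat) (m : nat -> int) (x : R) : R :=
  \sum_(0 <= k < n.+1) (m k)%:~R * x ^+ k * (1 - x) ^+ (n - k).

Definition convex_on (R : realType) (a b : R) (g : R -> R) : Prop :=
  forall x y t : R, a <= x <= b -> a <= y <= b -> 0 <= t <= 1 ->
    g (t * x + (1 - t) * y) <= t * g x + (1 - t) * g y.

Definition concave_on (R : realType) (a b : R) (g : R -> R) : Prop :=
  forall x y t : R, a <= x <= b -> a <= y <= b -> 0 <= t <= 1 ->
    t * g x + (1 - t) * g y <= g (t * x + (1 - t) * y).

(* Main.v *)
Require Import Defs.
From HB Require Import structures.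
From mathcomp Require Import all_boot all_order all_algebra.
From mathcomp Require Import reals.
From mathcomp Require Import ring lra zify.
From mathcomp Require Import interval_inference boolp classical_sets topology normedtype derive realfun convex.
Import Order.TTheory GRing.Theory Num.Theory.
Local Open Scope ring_scope.

Lemma D1_horner (R : realType) (p : {poly R}) : @derive R R^o R^o (horner p) ^~ 1 = horner p^`().
Proof. by apply/funext => z; rewrite derivE derive1E. Qed.

Lemma poly_convex (R : realType) (p : {poly R}) :
  (forall x, 0 < x < 1 -> 0 <= (p^`()^`()).[x]) -> convex_on 0 1 (horner p).
Proof.
move=> H.
have key : forall a b (t : R), 0 <= a -> b <= 1 -> a <= b -> 0 <= t <= 1 ->
    p.[t * a + (1 - t) * b] <= t * p.[a] + (1 - t) * p.[b].
  move=> a b t a0 b1 ab /andP[t0 t1].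
  have := @second_derivative_convex R (horner p) a b _ _ _ _ _ (Itv01 t0 t1) ab.
  rewrite !convRE /=.
  apply.
  - move=> z /andP[az zb]; rewrite D1_horner; have -> : forall q : {poly R}, @derive R R^o R^o (horner q) z 1 = q^`().[z] by move=> q; rewrite derivE derive1E. apply: H.
    by rewrite (le_lt_trans a0 az) (lt_le_trans zb b1).
  - by apply: cvg_at_left_filter; exact: continuous_horner.
  - by apply: cvg_at_right_filter; exact: continuous_horner.
  - by move=> z _; exact: derivable_horner.
  - by move=> z _; rewrite D1_horner; exact: derivable_horner.
move=> x y t /andP[x0 x1] /andP[y0 y1] /andP[t0 t1].
have [xy|yx] := leP x y; first by apply: key; rewrite ?t0.
have := key y x (1 - t) y0 x1 (ltW yx).
rewrite subr_ge0 t1 lerBlDr lerDl t0 => /(_ isT).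
by rewrite subKr addrC [t * p.[x] + _]addrC.
Qed.

Section Bern.
Variable R : comNzRingType.

Definition bern n (c : nat -> R) : {poly R} :=
  \sum_(k < n.+1) (c k * ('C(n, k))%:R) *: ('X^k * (1 - 'X) ^+ (n - k)).

Lemma bern0 c : bern 0 c = (c 0%N)%:P.
Proof.
by rewrite /bern big_ord1 /= !expr0 !mulr1 alg_polyC.
Qed.

Lemma bernB n a b : bern n (fun k => a k - b k) = bern n a - bern n b.
Proof.
by rewrite /bern -sumrB; apply: eq_bigr => i _; rewrite mulrBl scalerBl.
Qed.

Lemma bern_rec n c :
  bern n.+1 c = (1 - 'X) * bern n c + 'X * bern n (fun k => c k.+1).
Proof.
rewrite /bern big_ord_recl /=.
under eq_bigr do rewrite /bump /= add1n binS natrD mulrDr scalerDl.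
rewrite big_split /= addrA; congr (_ + _).
  rewrite [RHS]mulr_sumr [RHS]big_ord_recl [in X in X = _]big_ord_recr /=.
  rewrite (bin_small (ltnSn n)) mulr0 scale0r addr0 /bump /=.
  rewrite !bin0 !subn0 -scalerAr mulrCA -exprS; congr (_ + _).
  apply: eq_bigr => i _; rewrite /bump /= add1n -scalerAr mulrCA -exprS.
  by rewrite subSn // ltn_ord.
rewrite mulr_sumr; apply: eq_bigr => i _.
by rewrite -scalerAr mulrA -exprS subSS.
Qed.

Lemma bern_deriv n : forall c,
  (bern n.+1 c)^`() = (n.+1)%:R *: bern n (fun k => c k.+1 - c k).
Proof.
elim: n => [|n IH] c.
  rewrite bern_rec !bern0 !poly.derivE /=.
  by rewrite scale1r polyCB; ring.
rewrite [bern n.+2 c]bern_rec derivD !derivM !poly.derivE !IH.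
have E1 := bern_rec n (fun k => c k.+1 - c k).
rewrite (mulrSr 1 n.+1) scalerDl scale1r {1}E1 bernB.
rewrite !bernB -!mul_polyC; ring.
Qed.

End Bern.
Arguments bern {R} n c.

Lemma horner_bern (R : comNzRingType) n (c : nat -> R) x :
  (bern n c).[x] = \sum_(k < n.+1) c k * ('C(n, k))%:R * x ^+ k * (1 - x) ^+ (n - k).
Proof.
rewrite /bern horner_sum; apply: eq_bigr => i _.
by rewrite hornerZ hornerM hornerXn horner_exp hornerD hornerN hornerX hornerC !mulrA.
Qed.

Lemma bern_ge0 (F : realFieldType) n (c : nat -> F) x :
  0 <= x <= 1 -> (forall k, (k <= n)%N -> 0 <= c k) -> 0 <= (bern n c).[x].
Proof.
move=> /andP[x0 x1] H; rewrite horner_bern; apply: sumr_ge0 => i _.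
rewrite !mulr_ge0 ?exprn_ge0 ?subr_ge0 ?ler0n //.
by apply: H; rewrite -ltnS.
Qed.

Lemma near_int (F : realFieldType) (z m : int) :
  `|(z%:~R : F) - m%:~R| <= 2^-1 -> z = m.
Proof.
rewrite -intrB -intr_norm => H.
apply/eqP; rewrite -subr_eq0 -normr_eq0; apply/eqP.
have : `|z - m|%:~R < (1 : F).
  apply: (le_lt_trans H); rewrite invf_lt1 ?ltr1n //.
rewrite ltrz1 => H1.
have : (0 <= `|z - m|)%R by [].
lia.
Qed.

Lemma bern_convex (R : realType) n (c : nat -> R) :
  (forall k, (k.+2 <= n)%N -> 0 <= c k.+2 - 2 * c k.+1 + c k) ->
  convex_on 0 1 (horner (bern n c)).
Proof.
move=> H; apply: poly_convex => x /andP[x0 x1].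
case: n H => [|[|n]] H.
- by rewrite bern0 !poly.derivC horner0.
- by rewrite bern_deriv bern0 poly.derivZ poly.derivC scaler0 horner0.
rewrite bern_deriv poly.derivZ bern_deriv scalerA hornerZ.
apply: mulr_ge0; first by rewrite -natrM ler0n.
apply: bern_ge0; first by rewrite ltW // ltW.
move=> k kn; have := H k; rewrite !ltnS => /(_ kn); lra.
Qed.

Lemma core (R : realType) (f Phi : R -> R) (n : nat) (m : nat -> int) :
  (exists z : int, f 0 = z%:~R) ->
  (exists z : int, f 1 = z%:~R) ->
  (2 <= n)%N ->
  (forall k : nat, (k <= n)%N ->
     is_nearest_int (f (k%:R / n%:R) * ('C(n, k))%:R) (m k)) ->
  Phi (2%:R / n%:R) - 2 * Phi (1 / n%:R) + Phi 0 >=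
    2^-1 * (2 * ('C(n, 1))%:R^-1 + ('C(n, 2))%:R^-1) ->
  (forall k : nat, (1 <= k)%N -> (k <= n - 3)%N ->
     Phi ((k.+2)%:R / n%:R) - 2 * Phi ((k.+1)%:R / n%:R) + Phi (k%:R / n%:R) >=
       2^-1 * (('C(n, k))%:R^-1 + 2 * ('C(n, k.+1))%:R^-1
               + ('C(n, k.+2))%:R^-1)) ->
  Phi 1 - 2 * Phi ((n - 1)%N%:R / n%:R) + Phi ((n - 2)%N%:R / n%:R) >=
    2^-1 * (('C(n, n - 2))%:R^-1 + 2 * ('C(n, n - 1))%:R^-1) ->
  convex_on 0 1 (fun x => f x - Phi x) -> convex_on 0 1 (@Bhat R n m).
Proof.
move=> [z0 f0] [z1 f1] n2 Hm H0 Hmid Hlast Hconv.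
have n0 : (n%:R : R) != 0 by rewrite pnatr_eq0 -lt0n (ltn_trans _ n2).
have npos : (0 : R) < n%:R by rewrite ltr0n (ltn_trans _ n2).
have Cn0 : forall k, (k <= n)%N -> (('C(n, k))%:R : R) != 0.
  by move=> k kn; rewrite pnatr_eq0 -lt0n bin_gt0.
pose c := fun k => (m k)%:~R / ('C(n, k))%:R : R.
have EB : @Bhat R n m = horner (bern n c).
  apply/funext => x; rewrite horner_bern /Bhat big_mkord; apply: eq_bigr => i _.
  by rewrite /c divfK // Cn0 // -ltnS.
rewrite EB; apply: bern_convex.
pose F := fun j : nat => f (j%:R / n%:R).
pose P := fun j : nat => Phi (j%:R / n%:R).
have herr : forall j, (j <= n)%N ->
    - (2^-1 * (('C(n, j))%:R)^-1) <= c j - F j <= 2^-1 * (('C(n, j))%:R)^-1.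
  move=> j jn; have := Hm j jn; rewrite /is_nearest_int => H.
  rewrite -ler_norml.
  have -> : c j - F j = - ((F j * ('C(n, j))%:R - (m j)%:~R) / ('C(n, j))%:R).
    by rewrite /c /F; field; rewrite Cn0.
  rewrite normrN normrM normfV normr_nat.
  by apply: ler_wpM2r => //; rewrite invr_ge0 ler0n.
have hc0 : c 0%N = F 0%N.
  have := Hm 0%N (leq0n _); rewrite /is_nearest_int mul0r f0 bin0 mulr1 => /near_int Hz.
  by rewrite /c /F mul0r f0 bin0 divr1 Hz.
have hcn : c n = F n.
  have := Hm n (leqnn _); rewrite /is_nearest_int divff // f1 binn mulr1 => /near_int Hz.
  by rewrite /c /F divff // f1 binn divr1 Hz.
have hconv : forall k, (k.+2 <= n)%N ->
    F k.+1 - P k.+1 <= 2^-1 * (F k - P k) + (1 - 2^-1) * (F k.+2 - P k.+2).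
  move=> k kn.
  have bnd : forall j : nat, (j <= n)%N -> (0 <= (j%:R / n%:R : R)) && ((j%:R / n%:R : R) <= 1).
    move=> j jn; apply/andP; split; first by rewrite divr_ge0 ?ler0n.
    by rewrite ler_pdivrMr // mul1r ler_nat.
  have arg : 2^-1 * (k%:R / n%:R) + (1 - 2^-1) * (k.+2%:R / n%:R) = k.+1%:R / n%:R :> R.
    rewrite -[k.+2]addn2 -[k.+1]addn1 !natrD; field; exact: n0.
  have := Hconv (k%:R / n%:R) (k.+2%:R / n%:R) 2^-1 (bnd k (ltnW (ltnW kn))) (bnd _ kn).
  rewrite arg /F /P; apply.
  by rewrite invr_ge0 ler0n /= invf_le1 // ler1n.
move=> k kn.
have /andP[e1 e1'] := herr k (ltnW (ltnW kn)).
have /andP[e2 e2'] := herr k.+1 (ltnW kn).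
have /andP[e3 e3'] := herr k.+2 kn.
have hk := hconv k kn.
have [k0|k0] := eqVneq k 0%N.
  subst k.
  move: H0; have -> : Phi (2%:R / n%:R) = P 2%N by [].
  have -> : Phi (1 / n%:R) = P 1%N by [].
  have -> : Phi 0 = P 0%N by rewrite /P mul0r.
  rewrite hc0; lra.
have [kn'|kn'] := eqVneq k.+2 n.
  have E1 : (n - 1 = k.+1)%N by rewrite -kn' subSS subn0.
  have E2 : (n - 2 = k)%N by rewrite -kn' !subSS subn0.
  move: Hlast; rewrite E1 E2.
  have -> : Phi 1 = P k.+2 by rewrite /P kn' divff.
  rewrite -/(P k.+1) -/(P k).
  have hcn' : c k.+2 = F k.+2 by rewrite kn'.
  rewrite hcn'; lra.
have k1 : (1 <= k)%N by rewrite lt0n.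
have k3 : (k <= n - 3)%N by move/eqP: kn'; lia.
have := Hmid k k1 k3; rewrite -/(P k.+2) -/(P k.+1) -/(P k); lra.
Qed.

Theorem proposition3p3 (R : realType) (f Phi : R -> R) (n : nat) (m : nat -> int) :
  (exists z : int, f 0 = z%:~R) ->
  (exists z : int, f 1 = z%:~R) ->
  (2 <= n)%N ->
  (forall k : nat, (k <= n)%N ->
     is_nearest_int (f (k%:R / n%:R) * ('C(n, k))%:R) (m k)) ->
  Phi (2%:R / n%:R) - 2 * Phi (1 / n%:R) + Phi 0 >=
    2^-1 * (2 * ('C(n, 1))%:R^-1 + ('C(n, 2))%:R^-1) ->
  (forall k : nat, (1 <= k)%N -> (k <= n - 3)%N ->
     Phi ((k.+2)%:R / n%:R) - 2 * Phi ((k.+1)%:R / n%:R) + Phi (k%:R / n%:R) >=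
       2^-1 * (('C(n, k))%:R^-1 + 2 * ('C(n, k.+1))%:R^-1
               + ('C(n, k.+2))%:R^-1)) ->
  Phi 1 - 2 * Phi ((n - 1)%N%:R / n%:R) + Phi ((n - 2)%N%:R / n%:R) >=
    2^-1 * (('C(n, n - 2))%:R^-1 + 2 * ('C(n, n - 1))%:R^-1) ->
  (convex_on 0 1 (fun x => f x - Phi x) -> convex_on 0 1 (@Bhat R n m)) /\
  (concave_on 0 1 (fun x => f x + Phi x) -> concave_on 0 1 (@Bhat R n m)).
Proof.
move=> [z0 f0] [z1 f1] n2 Hm H0 Hmid Hlast; split.
  by apply: core => //; [exists z0 | exists z1].
move=> Hc.
have Hconv := @core R (fun x => - f x) Phi n (fun k => - m k).
have EB : forall x, @Bhat R n (fun k => - m k) x = - @Bhat R n m x.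
  move=> x; rewrite /Bhat -sumrN; apply: eq_bigr => i _.
  by rewrite mulrNz !mulNr.
have Hb : convex_on 0 1 (@Bhat R n (fun k => - m k)).
  apply: Hconv => //.
  - by exists (- z0); rewrite f0 mulrNz.
  - by exists (- z1); rewrite f1 mulrNz.
  - move=> k kn; have := Hm k kn; rewrite /is_nearest_int.
    by rewrite mulNr mulrNz -opprD normrN.
  - move=> x y t hx hy ht; have := Hc x y t hx hy ht; lra.
move=> x y t hx hy ht; have := Hb x y t hx hy ht; rewrite !EB; lra.
Qed.
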